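(* Let $Z\in\mathbb{R}^{n\times m}$, and let $\theta=(\theta_1,\dots,\theta_q)^T$ with $\theta_1=\sigma^2>0$, where $\Sigma=\Sigma(\theta_2,\dots,\theta_q)\in\mathbb{R}^{m\times m}$ is a covariance matrix depending differentiably on $\theta_2,\dots,\theta_q$. Put $C=Z\Sigma Z^T+\sigma^2I_n$. For each $i$ let $N(i)\subseteq\{1,\dots,i-1\}$, $A_i=(Z\Sigma Z^T)_{i,N(i)}(C_{N(i)})^{-1}$, $D_i=C_{i,i}-A_i(Z\Sigma Z^T)_{N(i),i}$; let $B$ be the unit lower triangular $n\times n$ matrix with $(B)_{i,N(i)}=-A_i$ and zeros elsewhere off the diagonal, and $D=\mathrm{diag}(D_1,\dots,D_n)$. Consider the model $y\sim\mathcal{N}(F,\tilde\Psi)$ with $\tilde\Psi=B^{-1}DB^{-T}$ and fixed mean $F\in\mathbb{R}^n$. Then its Fisher information matrix $I\in\mathbb{R}^{q\times q}$ with respect to $\theta$, $(I)_{kl}=\frac12\mathrm{tr}\left(\tilde\Psi^{-1}\frac{\partial\tilde\Psi}{\partial\theta_k}\tilde\Psi^{-1}\frac{\partial\tilde\Psi}{\partial\theta_l}\right)$, has entries $$(I)_{kl}=\sum_{i,j=1}^n\left(D^{-1}\frac{\partial B}{\partial\theta_k}B^{-1}\right)_{ij}\left(\frac{\partial B}{\partial\theta_l}B^{-1}D\right)_{ij}+\frac12\sum_{i=1}^nD_i^{-2}\frac{\partial D_i}{\partial\theta_k}\frac{\partial D_i}{\partial\theta_l},\qquad 1\le k,l\le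 q,$$ where $\frac{\partial B}{\partial\theta_k}$ (lower triangular with zero diagonal, non-zero entries $(\frac{\partial B}{\partial\theta_k})_{i,N(i)}=-\frac{\partial A_i}{\partial\theta_k}$) and $\frac{\partial D}{\partial\theta_k}=\mathrm{diag}(\frac{\partial D_i}{\partial\theta_k})$ are the entrywise derivatives of $B$ and $D$.
   Context: For a matrix $M$, $M_{i,N(i)}$ is the submatrix with row $i$ and columns $N(i)$, $M_{N(i),i}$ the submatrix with rows $N(i)$ and column $i$, and $M_{N(i)}$ the submatrix with rows and columns $N(i)$. The model $\mathcal{N}(F,B^{-1}DB^{-T})$ is the Vecchia approximation of $y=F+Zb+\epsilon$, $b\sim\mathcal{N}(0,\Sigma)$, $\epsilon\sim\mathcal{N}(0,\sigma^2I_n)$, obtained by replacing each conditional density $p(y_i\mid y_1,\dots,y_{i-1})$ by $p(y_i\mid y_{N(i)})$. *)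

(* Defs.v *)
From HB Require Import structures.
From mathcomp Require Import all_boot all_order all_algebra.
From mathcomp Require Import all_classical all_reals all_analysis.
Set Implicit Arguments. Unset Strict Implicit. Unset Printing Implicit Defensive.
Import Order.TTheory GRing.Theory Num.Theory.
Import numFieldNormedType.Exports.
Local Open Scope ring_scope.

Section Vecchia.
Variables (R : realType) (n m : nat).
Variable (Z : 'M[R]_(n, m)).
Variable (N : 'I_n -> {set 'I_n}).

Definition sel (A : {set 'I_n}) : 'M[R]_(#|A|, n) :=
  \matrix_(a < #|A|, j < n) ((enum_val a == j)%:R).

Definition Kmat (S : 'M[R]_m) : 'M[R]_n := Z *m S *m Z^T.
Definition Cmat (S : 'M[R]_m) (s2 : R) : 'M[R]_n := Kmat S + s2%:M.

Definition Csub (S : 'M[R]_m) (s2 : R) (i : 'I_n) : 'M[R]_#|N i| :=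
  \matrix_(a < #|N i|, b < #|N i|) Cmat S s2 (enum_val a) (enum_val b).

Definition Arow (S : 'M[R]_m) (s2 : R) (i : 'I_n) : 'rV[R]_#|N i| :=
  (\row_(b < #|N i|) Kmat S i (enum_val b)) *m invmx (Csub S s2 i).

Definition Dval (S : 'M[R]_m) (s2 : R) (i : 'I_n) : R :=
  Cmat S s2 i i - (Arow S s2 i *m \col_(a < #|N i|) Kmat S (enum_val a) i) 0 0.

Definition Bmat (S : 'M[R]_m) (s2 : R) : 'M[R]_n :=
  1%:M - \matrix_(i < n, j < n) (Arow S s2 i *m sel (N i)) 0 j.

Definition Dmat (S : 'M[R]_m) (s2 : R) : 'M[R]_n :=
  diag_mx (\row_(i < n) Dval S s2 i).

Definition Psi (S : 'M[R]_m) (s2 : R) : 'M[R]_n :=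
  invmx (Bmat S s2) *m Dmat S s2 *m (invmx (Bmat S s2))^T.

(* parametrisation by theta = (theta_1, ..., theta_q) with theta_1 = sigma^2 ;
   index 0 of 'rV_q.+1 is theta_1, and Sigma depends on the remaining q entries *)
Variable (q : nat).
Variable (Sigma : 'rV[R]_q -> 'M[R]_m).

Definition sig2 (th : 'rV[R]_q.+1) : R := th 0 0.
Definition rest (th : 'rV[R]_q.+1) : 'rV[R]_q := \row_(k < q) th 0 (lift ord0 k).

Definition B_th (th : 'rV[R]_q.+1) := Bmat (Sigma (rest th)) (sig2 th).
Definition D_th (th : 'rV[R]_q.+1) := Dmat (Sigma (rest th)) (sig2 th).
Definition Di_th (i : 'I_n) (th : 'rV[R]_q.+1) := Dval (Sigma (rest th)) (sig2 th) i.
Definition Psi_th (th : 'rV[R]_q.+1) := Psi (Sigma (rest th)) (sig2 th).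

Definition ek (k : 'I_q.+1) : 'rV[R]_q.+1 := delta_mx 0 k.

Definition fisher (th : 'rV[R]_q.+1) (k l : 'I_q.+1) : R :=
  2^-1 * \tr (invmx (Psi_th th) *m 'D_(ek k) Psi_th th
              *m invmx (Psi_th th) *m 'D_(ek l) Psi_th th).

End Vecchia.
Arguments ek {R q} k.

(* Main.v *)
Require Import Defs.
From HB Require Import structures.
From mathcomp Require Import all_boot all_order all_algebra.
From mathcomp Require Import all_classical all_reals all_analysis.
From mathcomp Require Import fingroup perm ring lra.
Import Order.TTheory GRing.Theory Num.Theory.
Import numFieldNormedType.Exports.
Local Open Scope ring_scope.
Set Implicit Arguments. Unset Strict Implicit.

Section Calc.
Variables (R : realType) (V : normedModType R) (x v : V).

Lemma isd_sum (I : Type) (s : seq I) (P : pred I) (F : I -> V -> R) (dF : I -> R) :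
  (forall i, P i -> is_derive x v (F i) (dF i)) ->
  is_derive x v (fun y => \sum_(i <- s | P i) F i y) (\sum_(i <- s | P i) dF i).
Proof.
move=> H; elim: s => [|a s IH].
  rewrite big_nil; under eq_fun do rewrite big_nil; exact: is_derive_cst.
rewrite big_cons; under eq_fun do rewrite big_cons.
case Pa: (P a); last exact: IH.
exact: (is_deriveD (H a Pa) IH).
Qed.

Lemma isd_prod (I : Type) (s : seq I) (P : pred I) (F : I -> V -> R) :
  (forall i, P i -> derivable (F i) x v) ->
  derivable (fun y => \prod_(i <- s | P i) F i y) x v.
Proof.
move=> H; elim: s => [|a s IH].
  under eq_fun do rewrite big_nil; exact: derivable_cst.
under eq_fun do rewrite big_cons.
case Pa: (P a); last exact: IH.
exact: (derivableM (H a Pa) IH).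
Qed.

Lemma isd_mx m n (F : V -> 'M[R]_(m, n)) (dF : 'M[R]_(m, n)) :
  (forall i j, is_derive x v (fun y => F y i j) (dF i j)) -> is_derive x v F dF.
Proof.
move=> H; have dv : derivable F x v by apply/derivable_mxP => i j; case: (H i j).
apply: DeriveDef => //; rewrite derive_mx //; apply/matrixP => i j.
by rewrite mxE; case: (H i j).
Qed.

Lemma isd_entry m n (F : V -> 'M[R]_(m, n)) (dF : 'M[R]_(m, n)) i j :
  is_derive x v F dF -> is_derive x v (fun y => F y i j) (dF i j).
Proof.
case=> dv <-; have di := (derivable_mxP F x v).1 dv i j.
by apply: DeriveDef => //; rewrite derive_mx // mxE.
Qed.

Lemma isd_mul m n p (F : V -> 'M[R]_(m, n)) (G : V -> 'M[R]_(n, p)) dF dG :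
  is_derive x v F dF -> is_derive x v G dG ->
  is_derive x v (fun y => F y *m G y) (dF *m G x + F x *m dG).
Proof.
move=> HF HG; apply: isd_mx => i j.
under eq_fun do rewrite mxE.
have -> : (dF *m G x + F x *m dG) i j = \sum_k (F x i k *: dG k j + G x k j *: dF i k).
  rewrite !mxE big_split addrC /=; congr (_ + _); apply: eq_bigr => k _;
  by rewrite mulrC.
have H1 := fun k => is_deriveM (isd_entry i k HF) (isd_entry k j HG).
exact: (isd_sum (index_enum _) (P:=xpredT) (fun k _ => H1 k)).
Qed.

Lemma isd_tr m n (F : V -> 'M[R]_(m, n)) dF :
  is_derive x v F dF -> is_derive x v (fun y => (F y)^T) dF^T.
Proof.
move=> HF; apply: isd_mx => i j; under eq_fun do rewrite mxE.
rewrite mxE; exact: (isd_entry j i).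
Qed.


Lemma isd_add m n (F G : V -> 'M[R]_(m, n)) dF dG :
  is_derive x v F dF -> is_derive x v G dG ->
  is_derive x v (fun y => F y + G y) (dF + dG).
Proof. move=> HF HG; exact: (is_deriveD HF HG). Qed.

Lemma isd_opp m n (F : V -> 'M[R]_(m, n)) dF :
  is_derive x v F dF -> is_derive x v (fun y => - F y) (- dF).
Proof. move=> HF; exact: (is_deriveN HF). Qed.

Lemma isd_sub m n (F G : V -> 'M[R]_(m, n)) dF dG :
  is_derive x v F dF -> is_derive x v G dG ->
  is_derive x v (fun y => F y - G y) (dF - dG).
Proof. move=> HF HG; exact: (is_deriveB HF HG). Qed.

Lemma isd_cst m n (c : 'M[R]_(m, n)) : is_derive x v (fun _ => c) 0.
Proof. exact: is_derive_cst. Qed.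

Lemma der_sum (I : Type) (s : seq I) (P : pred I) (F : I -> V -> R) :
  (forall i, P i -> derivable (F i) x v) ->
  derivable (fun y => \sum_(i <- s | P i) F i y) x v.
Proof.
move=> H.
have H' : forall i, P i -> is_derive x v (F i) ('D_v (F i) x).
  by move=> i Pi; apply: derivableP; apply: H.
by case: (isd_sum s H').
Qed.

Lemma der_det p (M : V -> 'M[R]_p) :
  (forall i j, derivable (fun y => M y i j) x v) ->
  derivable (fun y => \det (M y)) x v.
Proof.
move=> H.
have E : forall A : 'M[R]_p, \det A = \sum_(s : 'S_p) (-1) ^+ s * \prod_i A i (s i) by [].
under eq_fun do rewrite E.
apply: (der_sum (P := xpredT) (F := fun (s : 'S_p) y => (-1) ^+ s * \prod_i M y i (s i))) => s _.
apply: derivableM; first exact: derivable_cst.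
exact: (isd_prod _ (F := fun i y => M y i (s i))).
Qed.

End Calc.

Lemma derive_line (R : realType) (V W : normedModType R) (f : V -> W) x v :
  'D_v f x = 'D_1 (fun h : R => f (h *: v + x)) 0.
Proof.
rewrite /derive; set g1 := fun h => h^-1 *: _; set g2 := fun h => h^-1 *: _.
suff -> : g1 = g2 by [].
by rewrite funeqE /g1 /g2 => h /=; rewrite addr0 scale0r add0r [_%:A]mulr1.
Qed.

Lemma isd_line (R : realType) (V W : normedModType R) (f : V -> W) (x v : V) (df : W) :
  is_derive (0 : R^o) (1 : R^o) (fun h : R => f (h *: v + x)) df -> is_derive x v f df.
Proof.
case=> d1 e1; apply: DeriveDef; first exact/derivable1P.
by rewrite derive_line.
Qed.

Lemma isd_inv_line (R : realType) p (g : R -> 'M[R]_p) (dg : 'M[R]_p) :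
  is_derive (0 : R) (1 : R) g dg -> g 0 \in unitmx ->
  is_derive (0 : R) (1 : R) (fun h => invmx (g h)) (- (invmx (g 0) *m dg *m invmx (g 0))).
Proof.
move=> Hg U0.
have dv := @ex_derive _ _ _ _ _ _ _ Hg.
have de : forall i j, derivable (fun h => g h i j) 0 1 by apply/derivable_mxP.
have ddet : derivable (fun h => \det (g h)) 0 1 by apply: der_det.
have cdet : {for 0, continuous (fun h => \det (g h))}.
  exact/differentiable_continuous/derivable1_diffP.
have nz : \forall h \near 0, \det (g h) != 0.
  by apply: (cvgr_neq0 _ cdet); rewrite -unitfE -unitmxE.
have neq : \forall h \near 0, (\det (g h))^-1 *: \adj (g h) = invmx (g h).
  by apply: filterS nz => h hnz; rewrite /invmx unitmxE unitfE hnz.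
have dH : derivable (fun h => (\det (g h))^-1 *: \adj (g h)) 0 1.
  apply/derivable_mxP => i j; under eq_fun do rewrite !mxE.
  apply: derivableM; first by apply: derivableV => //; rewrite -unitfE.
  apply: derivableM; first exact: derivable_cst.
  by apply: der_det => a b; under eq_fun do rewrite !mxE; apply: de.
have dI : derivable (fun h => invmx (g h)) 0 1.
  exact: (near_eq_derivable neq dH).
have HI := derivableP dI.
have HP := isd_mul Hg HI.
have : 'D_(1:R) (fun h : R => g h *m invmx (g h)) 0 = 'D_(1:R) (fun _ : R => (1%:M : 'M[R]_p)) 0.
  apply: near_eq_derive; near do rewrite mulmxV // unitmxE unitfE.
  done.
rewrite derive_cst.
case: HP => _ ->.
move=> E; apply: (is_derive_eq HI); move: E.
set dI' := 'D_(1:R) (fun h : R => invmx (g h)) 0 => E.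
have -> : dI' = invmx (g 0) *m (g 0 *m dI').
  by rewrite mulmxA mulVmx // mul1mx.
have -> : g 0 *m dI' = - (dg *m invmx (g 0)).
  by apply/eqP; rewrite -addr_eq0 addrC E.
by rewrite mulmxN mulmxA.
Unshelve. all: by end_near.
Qed.

Lemma isd_line_inv (R : realType) (V W : normedModType R) (f : V -> W) (x v : V) (df : W) :
  is_derive x v f df -> is_derive (0 : R) (1 : R) (fun h : R => f (h *: v + x)) df.
Proof.
case=> d1 e1; apply: DeriveDef; first exact: ((derivable1P f x v).1 d1).
by rewrite -e1 [RHS]derive_line.
Qed.

Lemma isd_inv (R : realType) (V : normedModType R) (x v : V) p (F : V -> 'M[R]_p) dF :
  is_derive x v F dF -> F x \in unitmx ->
  is_derive x v (fun y => invmx (F y)) (- (invmx (F x) *m dF *m invmx (F x))).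
Proof.
move=> HF U; apply: isd_line.
have := isd_inv_line (isd_line_inv HF); rewrite scale0r add0r; exact.
Qed.

Section Alg.
Variables (R : numFieldType) (n : nat).
Implicit Types (A B : 'M[R]_n).

Definition slow A := forall i j : 'I_n, (i <= j)%N -> A i j = 0.
Definition low A := forall i j : 'I_n, (i < j)%N -> A i j = 0.

Lemma slow_tr0 A : slow A -> \tr A = 0.
Proof. by move=> H; rewrite /mxtrace big1 // => i _; rewrite H. Qed.

Lemma slow_mul A B : slow A -> slow B -> slow (A *m B).
Proof.
move=> HA HB i j lij; rewrite mxE big1 // => l _.
case: (leqP i l) => il; first by rewrite HA // mul0r.
by rewrite HB ?mulr0 // (leq_trans (ltnW il) lij).
Qed.

Lemma slow_mull A B : slow A -> low B -> slow (A *m B).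
Proof.
move=> HA HB i j lij; rewrite mxE big1 // => l _.
case: (leqP i l) => il; first by rewrite HA // mul0r.
by rewrite HB ?mulr0 // (leq_trans il lij).
Qed.

Lemma slow_diagl (d : 'rV[R]_n) A : slow A -> slow (diag_mx d *m A).
Proof. by move=> HA i j lij; rewrite mul_diag_mx mxE HA // mulr0. Qed.

Lemma slow_diagr (d : 'rV[R]_n) A : slow A -> slow (A *m diag_mx d).
Proof. by move=> HA i j lij; rewrite mul_mx_diag mxE HA // mul0r. Qed.

Lemma tr_mul_tr A B : \tr (A *m B^T) = \sum_i \sum_j A i j * B i j.
Proof. by apply: eq_bigr => i _; rewrite mxE; apply: eq_bigr => j _; rewrite mxE. Qed.

Lemma inv_uniq A X : A \in unitmx -> A *m X = 1%:M -> invmx A = X.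
Proof. by move=> U E; rewrite -[RHS](mulKmx U) E mulmx1. Qed.

Lemma inv_diag (d : 'rV[R]_n) : (forall i, d 0 i != 0) ->
  invmx (diag_mx d) = diag_mx (\row_i (d 0 i)^-1).
Proof.
move=> H; apply: inv_uniq.
  by rewrite unitmxE det_diag unitfE; apply/prodf_neq0 => i _.
rewrite mulmx_diag -diag_const_mx; congr diag_mx; apply/rowP => i.
by rewrite !mxE mulfV.
Qed.


Lemma slowX (a b : 'rV[R]_n) P : slow P -> slow (diag_mx a *m P *m diag_mx b).
Proof. by move=> H; apply: slow_diagr; apply: slow_diagl. Qed.

Lemma trT_diag (g : 'rV[R]_n) P : \tr (P^T *m diag_mx g) = \tr (diag_mx g *m P).
Proof. by rewrite -mxtrace_tr trmx_mul trmxK tr_diag_mx. Qed.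

Lemma trNeg A : \tr (- A) = - \tr A.
Proof. by rewrite /mxtrace -sumrN; apply: eq_bigr => i _; rewrite mxE. Qed.

Lemma trN A : (- A)^T = - A^T.
Proof. by apply/matrixP => i j; rewrite !mxE. Qed.

Section Main.
Variables (B : 'M[R]_n) (d : 'rV[R]_n).
Hypotheses (UB : B \in unitmx) (Hd : forall i, d 0 i != 0) (LBi : low (invmx B)).
Let Bi := invmx B.
Let D := diag_mx d.
Let Di := invmx D.
Let Psi := Bi *m D *m Bi^T.

Lemma UD : D \in unitmx.
Proof. by rewrite unitmxE det_diag unitfE; apply/prodf_neq0 => i _. Qed.

Lemma BiTBT : Bi^T *m B^T = 1%:M.
Proof. by rewrite -trmx_mul mulmxV // trmx1. Qed.

Lemma invPsi : invmx Psi = B^T *m Di *m B.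
Proof.
apply: inv_uniq.
  by rewrite /Psi !unitmx_mul unitmx_tr unitmx_inv UB UD.
rewrite /Psi -!mulmxA (mulmxA Bi^T) BiTBT mul1mx (mulmxA D) mulmxV ?UD //.
by rewrite mul1mx mulVmx.
Qed.

Definition dP (dB : 'M[R]_n) (dd : 'rV[R]_n) :=
  ((- (Bi *m dB *m Bi)) *m D + Bi *m diag_mx dd) *m Bi^T
  + (Bi *m D) *m (- (Bi *m dB *m Bi))^T.

Definition Mk (dB : 'M[R]_n) (dd : 'rV[R]_n) :=
  - (Di *m (dB *m Bi) *m D) + Di *m diag_mx dd - (dB *m Bi)^T.

Lemma invPsi_dP dB dd : invmx Psi *m dP dB dd = B^T *m Mk dB dd *m Bi^T.
Proof.
rewrite invPsi /dP /Mk !trN !trmx_mul.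
do 3! rewrite ?mulmxDr ?mulmxDl ?mulmxN ?mulNmx ?mulmxA.
by rewrite !(mulmxK UB) !(mulmxKV UD).
Qed.
Lemma tr_red X Y : \tr ((B^T *m X *m Bi^T) *m (B^T *m Y *m Bi^T)) = \tr (X *m Y).
Proof.
by rewrite -!mulmxA (mulmxA Bi^T) BiTBT mul1mx mxtrace_mulC -!mulmxA BiTBT mulmx1.
Qed.

Lemma main_alg dBk dBl (ddk ddl : 'rV[R]_n) : slow dBk -> slow dBl ->
  2^-1 * \tr (invmx Psi *m dP dBk ddk *m invmx Psi *m dP dBl ddl) =
  \sum_i \sum_j (Di *m dBk *m Bi) i j * (dBl *m Bi *m D) i j
  + 2^-1 * \sum_i (d 0 i) ^- 2 * ddk 0 i * ddl 0 i.
Proof.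
move=> Sk Sl.
rewrite -mulmxA !invPsi_dP tr_red /Mk.
have SPk : slow (dBk *m Bi) by apply: slow_mull.
have SPl : slow (dBl *m Bi) by apply: slow_mull.
rewrite -[Di *m dBk *m Bi]mulmxA.
move: (dBk *m Bi) (dBl *m Bi) SPk SPl => Pk Pl SPk SPl.
have EDi : Di = diag_mx (\row_i (d 0 i)^-1) by rewrite /Di inv_diag.
rewrite -!(mulmxA Di) !mulmxA.
rewrite EDi !mulmx_diag.
do 3! rewrite ?mulmxDr ?mulmxDl ?mulmxN ?mulNmx ?mxtraceD ?trNeg ?opprK.
set dv := \row_i (d 0 i)^-1.
set gk := \row_j (dv 0 j * ddk 0 j).
set gl := \row_j (dv 0 j * ddl 0 j).
have z1 : \tr (diag_mx dv *m Pk *m D *m (diag_mx dv *m Pl *m D)) = 0.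
  by apply: slow_tr0; apply: slow_mul; apply: slowX.
have z2 : \tr (diag_mx gk *m (diag_mx dv *m Pl *m D)) = 0.
  by apply: slow_tr0; apply: slow_diagl; apply: slowX.
have z4 : \tr (diag_mx dv *m Pk *m D *m diag_mx gl) = 0.
  by apply: slow_tr0; apply: slow_diagr; apply: slowX.
have z6 : \tr (Pk^T *m diag_mx gl) = 0.
  by rewrite trT_diag; apply: slow_tr0; apply: slow_diagl.
have z8 : \tr (diag_mx gk *m Pl^T) = 0.
  by rewrite mxtrace_mulC trT_diag; apply: slow_tr0; apply: slow_diagl.
have z9 : \tr (Pk^T *m Pl^T) = 0.
  by rewrite -trmx_mul mxtrace_tr; apply: slow_tr0; apply: slow_mul.
rewrite z1 z2 z4 z6 z8 z9 !(oppr0, subr0, addr0, add0r).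
set S := \sum_i _.
have e7 : \tr (diag_mx dv *m Pk *m D *m Pl^T) = S.
  rewrite tr_mul_tr; apply: eq_bigr => i _; apply: eq_bigr => j _.
  by rewrite /D !mul_mx_diag mul_diag_mx !mxE; ring.
have e3 : \tr (Pk^T *m (diag_mx dv *m Pl *m D)) = S.
  rewrite mxtrace_mulC tr_mul_tr; apply: eq_bigr => i _; apply: eq_bigr => j _.
  by rewrite /D !mul_mx_diag !mul_diag_mx !mxE; ring.
have e5 : \tr (diag_mx gk *m diag_mx gl) = \sum_i d 0 i ^- 2 * ddk 0 i * ddl 0 i.
  rewrite mulmx_diag mxtrace_diag; apply: eq_bigr => i _.
  by rewrite !mxE expr2 invfM; ring.
rewrite e7 e3 e5; field.
done.
Qed.

End Main.
End Alg.

Lemma rest_rsub (R : realType) q (y : 'rV[R]_q.+1) :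
  rest y = rsubmx (y : 'M[R]_(1, 1 + q)).
Proof. by apply/rowP => k; rewrite !mxE; congr (y 0 _); apply: val_inj. Qed.

Lemma dS (R : realType) q m (Sigma : 'rV[R]_q -> 'M[R]_m) th v :
  (forall x, differentiable Sigma x) -> derivable (fun y => Sigma (rest y)) th v.
Proof.
move=> dSig.
have -> : (fun y => Sigma (rest y)) =
   Sigma \o (rsubmx : 'M[R]_(1, 1 + q) -> 'M[R]_(1, q)).
  by apply/funext => y /=; rewrite rest_rsub.
apply: diff_derivable.
apply: differentiable_comp; last exact: dSig.
exact: (@differentiable_rsubmx R 1 1 q th).
Qed.

Lemma ds (R : realType) q (th v : 'rV[R]_q.+1) :
  derivable (fun y : 'rV[R]_q.+1 => sig2 y) th v.
Proof.
apply: diff_derivable.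
exact: (differentiable_coord th 0 0).
Qed.

Lemma der_mul' (R : realType) (V : normedModType R) (x v : V) a b c
  (F : V -> 'M[R]_(a, b)) (G : V -> 'M[R]_(b, c)) :
  derivable F x v -> derivable G x v -> derivable (fun y => F y *m G y) x v.
Proof. by move=> /derivableP HF /derivableP HG; case: (isd_mul HF HG). Qed.

Lemma der_inv' (R : realType) (V : normedModType R) (x v : V) a (F : V -> 'M[R]_a) :
  derivable F x v -> F x \in unitmx -> derivable (fun y => invmx (F y)) x v.
Proof. by move=> /derivableP HF U; case: (isd_inv HF U). Qed.

Lemma der_entry (R : realType) (V : normedModType R) (x v : V) a b
  (F : V -> 'M[R]_(a, b)) i j :
  derivable F x v -> derivable (fun y => F y i j) x v.
Proof. by move=> /derivable_mxP; apply. Qed.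

Lemma der_scal (R : realType) (V : normedModType R) (x v : V) a (f : V -> R) :
  derivable f x v -> derivable (fun y => (f y)%:M : 'M[R]_a) x v.
Proof.
move=> df; apply/derivable_mxP => i j; under eq_fun do rewrite mxE.
case: (i == j).
  by under eq_fun do rewrite mulr1n.
under eq_fun do rewrite mulr0n.
apply: (derivable_cst (0:R)).
Qed.

Section Model.
Variables (R : realType) (n m q : nat) (Z : 'M[R]_(n, m))
  (Sigma : 'rV[R]_q -> 'M[R]_m) (N : 'I_n -> {set 'I_n}) (th : 'rV[R]_q.+1).
Hypotheses (dSig : forall x, differentiable Sigma x)
  (UC : forall i, Csub Z N (Sigma (rest th)) (sig2 th) i \in unitmx)
  (Nlt : forall i j, j \in N i -> (j < i)%N).

Section Der.
Variable (v : 'rV[R]_q.+1).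

Lemma dK : derivable (fun y => Kmat Z (Sigma (rest y))) th v.
Proof.
apply: der_mul'; last exact: derivable_cst.
apply: der_mul'; first exact: derivable_cst.
exact: dS.
Qed.

Lemma dC : derivable (fun y => Cmat Z (Sigma (rest y)) (sig2 y)) th v.
Proof. apply: derivableD; [exact: dK | apply: der_scal; exact: ds]. Qed.

Lemma dCs i : derivable (fun y => Csub Z N (Sigma (rest y)) (sig2 y) i) th v.
Proof.
apply/derivable_mxP => a b; under eq_fun do rewrite mxE.
apply: der_entry; exact: dC.
Qed.

Lemma dA i : derivable (fun y => Arow Z N (Sigma (rest y)) (sig2 y) i) th v.
Proof.
rewrite /Arow; apply: der_mul'; last exact: der_inv' (dCs (i:=i)) (UC i).
apply/derivable_mxP => a b; under eq_fun do rewrite mxE.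
apply: der_entry; exact: dK.
Qed.

Lemma dDi i : derivable (Di_th Z N Sigma i) th v.
Proof.
rewrite /Di_th /Dval.
apply: derivableB; first by apply: der_entry; exact: dC.
apply: der_entry; apply: der_mul'; first exact: dA.
apply/derivable_mxP => a b; under eq_fun do rewrite mxE.
apply: der_entry; exact: dK.
Qed.

Lemma dB : derivable (B_th Z N Sigma) th v.
Proof.
rewrite /B_th /Bmat.
apply: derivableB; first exact: derivable_cst.
apply/derivable_mxP => a b; under eq_fun do rewrite mxE.
apply: der_entry; apply: der_mul'; [exact: dA | exact: derivable_cst].
Qed.

End Der.

Lemma ordF (i j : 'I_n) : (i < j)%N -> (i == j) = false.
Proof. by move=> h; apply/eqP => E; rewrite E ltnn in h. Qed.

Lemma mul_sel_notin (A : {set 'I_n}) (w : 'rV[R]_#|A|) j :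
  j \notin A -> (w *m sel R A) 0 j = 0.
Proof.
move=> jA; rewrite mxE big1 // => b _; rewrite mxE.
case: eqP => [E|_]; last by rewrite mulr0.
by move: (enum_valP b); rewrite E (negPf jA).
Qed.

Lemma B_upper (S : 'M[R]_m) s2 (i j : 'I_n) : (i <= j)%N ->
  Bmat Z N S s2 i j = (i == j)%:R.
Proof.
move=> ij; rewrite [LHS]mxE [X in X + _]mxE [X in _ + X]mxE [X in _ - X]mxE mul_sel_notin ?subr0 //.
by apply/negP => /Nlt; rewrite ltnNge ij.
Qed.

Lemma B_unit (S : 'M[R]_m) s2 : Bmat Z N S s2 \in unitmx.
Proof.
rewrite unitmxE (det_trig (A := Bmat Z N S s2)).
  by rewrite big1 ?unitr1 // => i _; rewrite B_upper // eqxx.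
apply/is_trig_mxP => i j ij; rewrite B_upper ?(ltnW ij) //.
by rewrite (ordF ij).
Qed.

Lemma Binv_low (S : 'M[R]_m) s2 : low (invmx (Bmat Z N S s2)).
Proof.
set B := Bmat Z N S s2; set Bi := invmx B.
suff H : forall k (i j : 'I_n), i = k :> nat -> (i < j)%N -> Bi i j = 0.
  by move=> i j; apply: H.
elim/ltn_ind => k IH i j ik ij.
have E : (B *m Bi) i j = 0 by rewrite mulmxV ?B_unit // mxE (ordF ij).
rewrite mxE (bigD1 i) //= big1 ?addr0 in E.
  by rewrite /B B_upper // eqxx mul1r in E.
move=> l li; case: (ltngtP l i) => [lti|ilt|/val_inj E']; last by rewrite E' eqxx in li.
  have -> : Bi l j = 0.
    by apply: (IH l) => //; [rewrite -ik | exact: ltn_trans lti ij].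
  by rewrite mulr0.
by rewrite /B B_upper ?(ltnW ilt) // (ordF ilt) mul0r.
Qed.

Lemma sel_mulE (A : {set 'I_n}) k (M : 'M[R]_(n, k)) a j :
  (sel R A *m M) a j = M (enum_val a) j.
Proof.
rewrite mxE (bigD1 (enum_val a)) //= big1 ?addr0; first by rewrite mxE eqxx mul1r.
by move=> l /negPf nl; rewrite mxE eq_sym nl mul0r.
Qed.

Lemma mul_selTE (A : {set 'I_n}) k (M : 'M[R]_(k, n)) i b :
  (M *m (sel R A)^T) i b = M i (enum_val b).
Proof.
rewrite mxE (bigD1 (enum_val b)) //= big1 ?addr0; first by rewrite !mxE eqxx mulr1.
by move=> l /negPf nl; rewrite !mxE eq_sym nl mulr0.
Qed.

Lemma sel_selT (A : {set 'I_n}) : sel R A *m (sel R A)^T = 1%:M.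
Proof.
apply/matrixP => a b; rewrite sel_mulE !mxE.
by rewrite (inj_eq enum_val_inj) eq_sym.
Qed.

Lemma sqsum_ge (k : nat) (u : 'rV[R]_k) i : u 0 i ^+ 2 <= (u *m u^T) 0 0.
Proof.
rewrite mxE (bigD1 i) //= mxE -expr2 lerDl; apply: sumr_ge0 => j _.
by rewrite mxE -expr2 sqr_ge0.
Qed.

Lemma sqsum_gt0 (k : nat) (u : 'rV[R]_k) : u != 0 -> 0 < (u *m u^T) 0 0.
Proof.
move=> u0; have [i ui] : exists i, u 0 i != 0.
  apply/existsP; apply: contraR u0 => /existsPn H; apply/eqP/rowP => i.
  by rewrite mxE; apply/eqP; move: (H i); rewrite negbK.
apply: lt_le_trans (sqsum_ge u i).
by rewrite lt_def sqr_ge0 andbT sqrf_eq0.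
Qed.

End Model.

Lemma trB (R : realType) a b (A B : 'M[R]_(a, b)) : (A - B)^T = A^T - B^T.
Proof. by apply/matrixP => i j; rewrite !mxE. Qed.

Section PD.
Variables (R : realType) (n m : nat) (Z : 'M[R]_(n, m)) (N : 'I_n -> {set 'I_n})
  (S : 'M[R]_m) (s2 : R).
Hypotheses (psdS : forall (v : 'cV[R]_m), 0 <= (v^T *m S *m v) 0 0)
  (s2pos : 0 < s2) (Nlt : forall i j, j \in N i -> (j < i)%N).

Let C := Cmat Z S s2.

Lemma PDC (u : 'rV[R]_n) : s2 * (u *m u^T) 0 0 <= (u *m C *m u^T) 0 0.
Proof.
rewrite /C /Cmat mulmxDr mulmxDl mul_mx_scalar -scalemxAl.
set X := u *m _ *m _; set Y := u *m u^T.
have -> : (X + s2 *: Y) 0 0 = X 0 0 + s2 * Y 0 0 by rewrite !mxE.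
rewrite lerDr /X /Kmat.
have := psdS (u *m Z)^T; rewrite trmxK !trmx_mul !mulmxA.
done.
Qed.

Lemma Csub_unit i : Csub Z N S s2 i \in unitmx.
Proof.
rewrite unitmxE unitfE; apply/negP => /det0P [w w0 wC].
set E := sel R (N i).
have CE : Csub Z N S s2 i = E *m C *m E^T.
  by apply/matrixP => a b; rewrite mul_selTE sel_mulE !mxE.
have := PDC (w *m E).
rewrite trmx_mul !mulmxA -(mulmxA w E) sel_selT mulmx1.
rewrite -(mulmxA w E C) -(mulmxA w (E *m C)) -CE wC mul0mx [X in _ <= X]mxE.
have := sqsum_gt0 w0; have := s2pos; set a := (w *m w^T) 0 0.
move=> h1 h2 h3.
have : 0 < s2 * a by apply: mulr_gt0.
by move=> h4; have := lt_le_trans h4 h3; rewrite ltxx.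
Qed.

Lemma Dval_ge i : s2 <= Dval Z N S s2 i.
Proof.
set E := sel R (N i); set e := delta_mx 0 i : 'rV[R]_n.
set K := Kmat Z S.
set rowK := \row_(b < #|N i|) K i (enum_val b).
set colK := \col_(a < #|N i|) K (enum_val a) i.
set w := Arow Z N S s2 i.
have niN : forall b : 'I_#|N i|, (i == enum_val b) = false.
  move=> b; apply/negP => /eqP E'; have := enum_valP b; rewrite -E' => /Nlt.
  by rewrite ltnn.
have F1 : e *m C *m E^T = rowK.
  apply/rowP => b; rewrite mul_selTE -rowE !mxE niN mulr0n addr0 //.
have F2 : E *m C *m e^T = colK.
  apply/colP => a; rewrite trmx_delta -colE [LHS]mxE sel_mulE !mxE eq_sym niN.
  by rewrite mulr0n addr0.
have F3 : E *m C *m E^T = Csub Z N S s2 i.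
  by apply/matrixP => a b; rewrite mul_selTE sel_mulE !mxE.
have wC : w *m Csub Z N S s2 i = rowK.
  by rewrite /w /Arow mulmxKV ?Csub_unit.
have wdef : w = Arow Z N S s2 i by [].
clearbody w.
set u := e - w *m E.
have Q : u *m C *m u^T = e *m C *m e^T - w *m colK.
  rewrite /u trB trmx_mul !mulmxBl !mulmxBr.
  rewrite !mulmxA F1 -(mulmxA w E C) -(mulmxA w (E *m C) e^T) F2.
  rewrite -(mulmxA w (E *m C) E^T) F3 wC.
  by rewrite opprB addrA subrK.
have P := PDC u; rewrite Q in P.
have u1 : u 0 i = 1.
  rewrite [LHS]mxE [X in _ + X]mxE mul_sel_notin ?oppr0 ?addr0; first by rewrite mxE !eqxx.
  by apply/negP => /Nlt; rewrite ltnn.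
have := sqsum_ge u i; rewrite u1 expr1n => H1.
have : (e *m C *m e^T - w *m colK) 0 0 = Dval Z N S s2 i.
  rewrite /Dval mxE [X in _ + X]mxE.
  rewrite -rowE trmx_delta -colE [X in X - _]mxE [X in X - _]mxE -wdef.
  by [].
move=> ED; rewrite -ED; apply: le_trans P.
rewrite -[X in X <= _]mulr1 ler_pM2l //.
Qed.

End PD.

Lemma isd_diag (R : realType) (V : normedModType R) (x v : V) p
  (r : V -> 'rV[R]_p) (dr : 'rV[R]_p) :
  (forall i, is_derive x v (fun y => r y 0 i) (dr 0 i)) ->
  is_derive x v (fun y => diag_mx (r y)) (diag_mx dr).
Proof.
move=> H; apply: isd_mx => i j; rewrite mxE; under eq_fun do rewrite mxE.
case: (i == j).
  rewrite mulr1n; under eq_fun do rewrite mulr1n; exact: H.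
rewrite mulr0n; under eq_fun do rewrite mulr0n; exact: is_derive_cst.
Qed.

Section Fin.
Variables (R : realType) (n m q : nat) (Z : 'M[R]_(n, m))
  (Sigma : 'rV[R]_q -> 'M[R]_m) (N : 'I_n -> {set 'I_n}) (th : 'rV[R]_q.+1).
Hypotheses (dSig : forall x, differentiable Sigma x)
  (UC : forall i, Csub Z N (Sigma (rest th)) (sig2 th) i \in unitmx)
  (Nlt : forall i j, j \in N i -> (j < i)%N).

Lemma dB_slow v : slow ('D_v (B_th Z N Sigma) th).
Proof.
move=> i j ij; rewrite derive_mx; last exact: dB.
rewrite mxE.
have -> : (fun y => B_th Z N Sigma y i j) = (fun _ => (i == j)%:R).
  by apply/funext => y; rewrite /B_th B_upper.
exact: derive_cst.
Qed.

Lemma DPsi v : 'D_v (Psi_th Z N Sigma) th =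
  dP (B_th Z N Sigma th) (\row_i Di_th Z N Sigma i th)
     ('D_v (B_th Z N Sigma) th) (\row_i 'D_v (Di_th Z N Sigma i) th).
Proof.
have HB := derivableP (dB dSig UC (v:=v)).
have HBi := isd_inv HB (B_unit Z Nlt _ _).
have HD : is_derive th v (D_th Z N Sigma) (diag_mx (\row_i 'D_v (Di_th Z N Sigma i) th)).
  apply: (isd_diag (r := fun y => \row_i Di_th Z N Sigma i y)) => i.
  rewrite mxE; under eq_fun do rewrite mxE.
  exact: derivableP (dDi dSig UC (v:=v) (i:=i)).
have HP := isd_mul (isd_mul HBi HD) (isd_tr HBi).
have := @derive_val _ _ _ _ _ _ _ HP.
move=> E; rewrite -[LHS]/('D_v (fun y => invmx (B_th Z N Sigma y) *m D_th Z N Sigma y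
   *m (invmx (B_th Z N Sigma y))^T) th) E.
by [].
Qed.

End Fin.

Lemma sum_row_eq (R : numFieldType) n (f g h : 'I_n -> R) :
  \sum_i (\row_i f i) 0 i ^- 2 * (\row_i g i) 0 i * (\row_i h i) 0 i =
  \sum_i f i ^- 2 * g i * h i.
Proof. by apply: eq_bigr => i _; rewrite !mxE. Qed.

Theorem proposition2 (R : realType) (n m q : nat) (Z : 'M[R]_(n, m))
  (Sigma : 'rV[R]_q -> 'M[R]_m) (N : 'I_n -> {set 'I_n})
  (th : 'rV[R]_q.+1) :
  (forall x, differentiable Sigma x) ->
  (forall x, (Sigma x)^T = Sigma x) ->
  (forall x (v : 'cV[R]_m), 0 <= (v^T *m Sigma x *m v) 0 0) ->
  (forall i j, j \in N i -> (j < i)%N) ->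
  0 < th 0 0 ->
  forall k l : 'I_q.+1,
    fisher Z N Sigma th k l =
      \sum_(i < n) \sum_(j < n)
         (invmx (D_th Z N Sigma th) *m 'D_(ek k) (B_th Z N Sigma) th
            *m invmx (B_th Z N Sigma th)) i j
       * ('D_(ek l) (B_th Z N Sigma) th *m invmx (B_th Z N Sigma th)
            *m D_th Z N Sigma th) i j
      + 2^-1 * \sum_(i < n)
          (Di_th Z N Sigma i th) ^- 2
          * 'D_(ek k) (Di_th Z N Sigma i) th
          * 'D_(ek l) (Di_th Z N Sigma i) th.
Proof.
move=> dSig _ psd Nlt s0 k l.
have psdS : forall v : 'cV[R]_m, 0 <= (v^T *m Sigma (rest th) *m v) 0 0 by move=> v; exact: psd.
have UC : forall i, Csub Z N (Sigma (rest th)) (sig2 th) i \in unitmx.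
  by move=> i; apply: (Csub_unit Z N psdS s0).
have Hd : forall i, (\row_i Di_th Z N Sigma i th) 0 i != 0.
  move=> i; rewrite mxE; apply/lt0r_neq0.
  exact: lt_le_trans s0 (Dval_ge Z psdS s0 Nlt i).
rewrite /fisher (DPsi dSig UC Nlt (ek k)) (DPsi dSig UC Nlt (ek l)).
rewrite -[D_th Z N Sigma th]/(diag_mx (\row_i Di_th Z N Sigma i th)).
rewrite -[Psi_th Z N Sigma th]/(invmx (B_th Z N Sigma th) *m
   diag_mx (\row_i Di_th Z N Sigma i th) *m (invmx (B_th Z N Sigma th))^T).
rewrite (main_alg (B_unit Z Nlt _ _) Hd (Binv_low Z Nlt _ _) _ _
   (dB_slow dSig UC Nlt (ek k)) (dB_slow dSig UC Nlt (ek l))).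
rewrite -[B_th Z N Sigma th]/(Bmat Z N (Sigma (rest th)) (sig2 th)).
congr (_ + _).
rewrite (sum_row_eq (fun i => Di_th Z N Sigma i th)
  (fun i => 'D_(ek k) (Di_th Z N Sigma i) th) (fun i => 'D_(ek l) (Di_th Z N Sigma i) th)).
reflexivity.
Qed.
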